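(* Let $\mathcal O_t=\{x\in\mathbb Z^d:N_{t,x}>0\}$ and let $|\mathcal O_t|$ be its cardinality. Suppose that $$\delta:=P\Big(\bigcap_{x\in\mathbb Z^d}\{A_{1,x,0}=0\}\Big)>0.$$ Then $P\big(\lim_{t\to\infty}|\mathcal O_t|\in\{0,\infty\}\big)=1$.
   Context: Let $d\ge1$. For $x\in\mathbb R^d$, $|x|=\sum_i|x_i|$. Let $A_t=(A_{t,x,y})_{x,y\in\mathbb Z^d}$, $t=1,2,\dots$, be i.i.d. random matrices on a probability space $(\Omega,\mathcal F,P)$ such that: (i) $A_{1,x,y}\ge0$; (ii) the columns $\{A_{1,\cdot,y}\}_{y\in\mathbb Z^d}$ are independent; (iii) $P[A_{1,x,y}^2]<\infty$ for all $x,y$; (iv) there is a nonrandom $r_A\in\mathbb N$ with $A_{1,x,y}=0$ a.s. if $|x-y|>r_A$; (v) $(A_{1,x+z,y+z})_{x,y}$ has the same law as $A_1$ for every $z\in\mathbb Z^d$; (vi) with $a_y=P[A_{1,0,y}]$, the set $\{x:\sum_y a_{x+y}a_y\neq0\}$ contains a linear basis of $\mathbb R^d$. Given a nonrandom $N_0\in[0,\infty)^{\mathbb Z^d}$ with $\{x:N_{0,x}>0\}$ finite and nonempty, define $N_{t,y}=\sum_xN_{t-1,x}A_{t,x,y}$ for $t\ge1$. *)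

(* Defs.v *)
From HB Require Import structures.
From mathcomp Require Import all_boot all_order all_algebra.
From mathcomp Require Import all_classical all_reals all_analysis.
Set Implicit Arguments. Unset Strict Implicit. Unset Printing Implicit Defensive.
Import Order.TTheory GRing.Theory Num.Theory.
Local Open Scope classical_set_scope.
Local Open Scope ring_scope.

Definition Zd (d : nat) := 'rV[int]_d.

Definition l1 (d : nat) (x : Zd d) : nat := (\sum_(i < d) `|x ord0 i|)%N.

(* Mutual independence of a family (indexed by I) of random vectors
   (X i j)_{j : J}, stated on finite-dimensional cylinder events, i.e. for
   the generating pi-systems of the sigma-algebras sigma(X i).  *)
Definition indep_family d (Omega : measurableType d) (R : realType)
  (P : probability Omega R) (I : eqType) (J : Type)
  (X : I -> J -> Omega -> R) : Prop :=
  forall (S : seq I), uniq S ->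
  forall (n : I -> nat) (f : I -> nat -> J) (B : I -> nat -> set R),
    (forall i k, measurable (B i k)) ->
    let cyl i := [set w | forall k, (k < n i)%N -> B i k (X i (f i k) w)] in
    P [set w | forall i, i \in S -> cyl i w] = (\prod_(i <- S) P (cyl i))%E.

(* Equality in law of two random fields (X j)_{j:J}, (Y j)_{j:J}
   (equality of all finite-dimensional distributions). *)
Definition same_law d (Omega : measurableType d) (R : realType)
  (P : probability Omega R) (J : Type) (X Y : J -> Omega -> R) : Prop :=
  forall (n : nat) (f : nat -> J) (B : nat -> set R),
    (forall k, measurable (B k)) ->
    P [set w | forall k, (k < n)%N -> B k (X (f k) w)] =
    P [set w | forall k, (k < n)%N -> B k (Y (f k) w)].

(* Population process: A n is the matrix A_{n+1} of the paper.
   N 0 = N0,  N (t+1) y = sum_x N t x * A_{t+1,x,y}. *)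
Fixpoint Npop d (Omega : Type) (R : realType) (N0 : Zd d -> R)
  (A : nat -> Zd d -> Zd d -> Omega -> R) (t : nat) (w : Omega) : Zd d -> R :=
  match t with
  | 0 => N0
  | t'.+1 => fun y => \sum_(x \in [set: Zd d]) Npop N0 A t' w x * A t' x y w
  end.

Definition occupied d (Omega : Type) (R : realType) (N0 : Zd d -> R)
  (A : nat -> Zd d -> Zd d -> Omega -> R) (t : nat) (w : Omega) : set (Zd d) :=
  [set x | 0 < Npop N0 A t w x].

(* Main.v *)
Require Import Defs.
From HB Require Import structures.
From mathcomp Require Import all_boot all_order all_algebra.
From mathcomp Require Import all_classical all_reals all_analysis.
Import Order.TTheory GRing.Theory Num.Theory.
Local Open Scope classical_set_scope.
Local Open Scope ring_scope.

Module Helpers.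
From mathcomp Require Import finmap zify ring lra.
Import Order.TTheory GRing.Theory Num.Theory.
Local Open Scope classical_set_scope.
Local Open Scope ring_scope.
Set Implicit Arguments. Unset Strict Implicit. Unset Printing Implicit Defensive.

Local Open Scope classical_set_scope.
Local Open Scope ring_scope.

Section Cube.
Variables (dd rA : nat).
Local Notation Z := (Zd dd).

Definition cube : seq Z :=
  [seq \row_(i < dd) ((f i : nat)%:Z - rA%:Z) | f : {ffun 'I_dd -> 'I_(rA.*2).+1}].

Lemma l1_ge (v : Z) i : (`|v ord0 i| <= l1 v)%N.
Proof.
rewrite /l1 (bigD1 i) //=; exact: leq_addr.
Qed.

Lemma cubeP (v : Z) : (l1 v <= rA)%N -> v \in cube.
Proof.
move=> hv.
have hb i : (`|v ord0 i| <= rA)%N by exact: leq_trans (l1_ge v i) hv.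
pose f := [ffun i : 'I_dd => (inord (absz (v ord0 i + rA%:Z)) : 'I_(rA.*2).+1)].
apply/mapP; exists f; first by rewrite mem_enum.
apply/rowP => i; rewrite mxE ffunE.
have h0 : (0 <= v ord0 i + rA%:Z)%R.
  by have := hb i; lia.
have h1 : (absz (v ord0 i + rA%:Z)%R < (rA.*2).+1)%N.
  by have := hb i; lia.
rewrite inordK // gez0_abs //; by rewrite addrK.
Qed.

End Cube.

Local Open Scope classical_set_scope.
Local Open Scope ring_scope.

Section Proc.
Variables (dd rA : nat) (R : realType) (N0 : Zd dd -> R).
Hypothesis N0ge0 : forall x, 0 <= N0 x.
Hypothesis N0fin : finite_set [set x | 0 < N0 x].
Local Notation Z := (Zd dd).

Definition F0 : seq Z := fset_set [set x | 0 < N0 x].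
Fixpoint F t : seq Z :=
  if t is t'.+1 then undup [seq x - v | x <- F t', v <- cube dd rA] else F0.

Lemma uniq_F t : uniq (F t).
Proof. by case: t => [|t] /=; [exact: fset_uniq | exact: undup_uniq]. Qed.

Fixpoint M (T : Type) (B : nat -> Z -> Z -> T -> R) (t : nat) (w : T) : Z -> R :=
  if t is t'.+1 then fun y => \sum_(x <- F t') M B t' w x * B t' x y w else N0.

Definition Gd (T : Type) (B : nat -> Z -> Z -> T -> R) (w : T) :=
  forall t x y, 0 <= B t x y w /\ ((rA < l1 (x - y)%R)%N -> B t x y w = 0).

Variables (T : Type) (B : nat -> Z -> Z -> T -> R).

Lemma M_ge0 w t y : Gd B w -> 0 <= M B t w y.
Proof.
move=> G; elim: t y => [|t IH] y /=; first exact: N0ge0.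
apply: sumr_ge0 => x _; apply: mulr_ge0; [exact: IH | by case: (G t x y)].
Qed.

Lemma M_out w t y : Gd B w -> y \notin F t -> M B t w y = 0.
Proof.
move=> G; case: t => [|t] /=.
  move=> hy; apply/eqP; rewrite eq_le N0ge0 andbT leNgt; apply/negP => hp.
  by move: hy; rewrite in_fset_set // mem_setE /=; apply/negP; rewrite negbK.
move=> hy; apply: big1_seq => x /andP [_ hx].
have [hl|hl] := ltnP rA (l1 (x - y)).
  by have [_ ->] := G t x y; rewrite ?mulr0.
exfalso; move: hy; rewrite mem_undup; apply/negP/negPn/allpairsP.
exists (x, x - y) => /=; split => //; first exact: cubeP.
by rewrite opprB addrC subrK.
Qed.

Lemma M_zero w t : (forall y, M B t w y = 0) -> forall y, M B t.+1 w y = 0.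
Proof.
by move=> h y /=; apply: big1 => x _; rewrite h mul0r.
Qed.

Lemma M_zero_le w t s : (t <= s)%N -> (forall y, M B t w y = 0) -> forall y, M B s w y = 0.
Proof.
move=> /subnKC <-; elim: (s - t)%N => [|k IH] h; first by rewrite addn0.
by rewrite addnS; apply: M_zero; apply: IH.
Qed.

End Proc.

Lemma Npop_M dd rA (R : realType) (N0 : Zd dd -> R) (Omega : Type)
  (A : nat -> Zd dd -> Zd dd -> Omega -> R) w t :
  (forall x, 0 <= N0 x) -> finite_set [set x | 0 < N0 x] ->
  Gd rA A w -> Npop N0 A t w = M rA N0 A t w.
Proof.
move=> N0ge0 N0fin G; elim: t => [|t IH] //=; apply/funext => y.
rewrite IH (fsbigE (F rA N0 t)) //.
- by rewrite big_mkcond /=; apply: eq_bigr => x _; rewrite in_setT.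
- exact: uniq_F.
- by move=> x _ hx; rewrite (M_out N0ge0 N0fin G hx) mul0r.
Qed.

Local Open Scope classical_set_scope.
Local Open Scope ring_scope.

Section Indep.
Variables (dd : nat) (d0 : measure_display) (Omega : measurableType d0)
  (R : realType) (P : probability Omega R)
  (A : nat -> Zd dd -> Zd dd -> Omega -> R).
Local Notation Z := (Zd dd).
Hypothesis Ameas : forall t x y, measurable_fun setT (A t x y).
Hypothesis Hind : indep_family P (fun (t : nat) (p : Z * Z) => A t p.1 p.2).

Definition cylt (t : nat) (n : nat) (f : nat -> Z * Z) (B : nat -> set R) : set Omega :=
  [set w | forall k, (k < n)%N -> B k (A t (f k).1 (f k).2 w)].

Definition Pi (t : nat) : set (set Omega) :=
  [set E | exists (n : nat -> nat) (f : nat -> nat -> Z * Z) (B : nat -> nat -> set R),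
    (forall i k, measurable (B i k)) /\
    E = [set w | forall i, (i < t)%N -> cylt i (n i) (f i) (B i) w]].

Lemma cylt_meas t n f B : (forall k, measurable (B k)) -> measurable (cylt t n f B).
Proof.
move=> mB; rewrite /cylt.
have -> : [set w | forall k, (k < n)%N -> B k (A t (f k).1 (f k).2 w)] =
  \bigcap_(k in [set k | (k < n)%N]) (A t (f k).1 (f k).2 @^-1` B k).
  by apply/seteqP; split => w /= h k; apply: h.
apply: bigcap_measurableType => k _.
by rewrite -[X in measurable X]setTI; apply: Ameas.
Qed.

Lemma Pi_meas t : Pi t `<=` measurable.
Proof.
move=> E [n [f [B [mB ->]]]].
have -> : [set w | forall i, (i < t)%N -> cylt i (n i) (f i) (B i) w] =
  \bigcap_(i in [set i | (i < t)%N]) cylt i (n i) (f i) (B i).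
  by apply/seteqP; split => w /= h k; apply: h.
by apply: bigcap_measurableType => i _; apply: cylt_meas.
Qed.

Lemma Pi_setI t : setI_closed (Pi t).
Proof.
move=> E1 E2 [n1 [f1 [B1 [mB1 ->]]]] [n2 [f2 [B2 [mB2 ->]]]].
exists (fun i => n1 i + n2 i)%N.
exists (fun i k => if (k < n1 i)%N then f1 i k else f2 i (k - n1 i)%N).
exists (fun i k => if (k < n1 i)%N then B1 i k else B2 i (k - n1 i)%N).
split; first by move=> i k; case: ifP.
apply/seteqP; split => w /=.
  move=> [h1 h2] i it k hk; case: ifP => hk1; first exact: h1.
  apply: h2 => //; lia.
move=> h; split => i it k hk.
  by have := h i it k; rewrite hk; apply; lia.
have hf : (n1 i + k < n1 i)%N = false by lia.
have := h i it (n1 i + k)%N; rewrite hf addKn; apply; lia.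
Qed.

Lemma setT_Pi t : Pi t setT.
Proof.
exists (fun=> 0%N), (fun _ _ => (0, 0)), (fun _ _ => setT); split => //.
by apply/seteqP; split => w //= _ i _ k.
Qed.

Local Open Scope ereal_scope.

Lemma Pi_indep t E n' f' B' : Pi t E -> (forall k, measurable (B' k)) ->
  P (E `&` cylt t n' f' B') = P E * P (cylt t n' f' B').
Proof.
move=> [n [f [B [mB ->]]]] mB'.
pose n2 i := if i == t then n' else n i.
pose f2 i := if i == t then f' else f i.
pose B2 i := if i == t then B' else B i.
have mB2 : forall i k, measurable (B2 i k) by move=> i k; rewrite /B2; case: ifP.
have := Hind (iota_uniq 0 (t.+1 - 0)) n2 f2 mB2.
have := Hind (iota_uniq 0 (t - 0)) n f mB.
rewrite /=.
have E1 : [set w | forall i, i \in index_iota 0 t -> forall k, (k < n i)%N ->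
     B i k (A i (f i k).1 (f i k).2 w)] =
   [set w | forall i, (i < t)%N -> cylt i (n i) (f i) (B i) w].
  apply/seteqP; split => w /= h i.
    by move=> it; apply: h; rewrite mem_index_iota.
  by rewrite mem_index_iota => /andP [_ it]; apply: h.
rewrite E1 => ->.
have E2 : [set w | forall i, i \in index_iota 0 t.+1 -> forall k, (k < n2 i)%N ->
     B2 i k (A i (f2 i k).1 (f2 i k).2 w)] =
   [set w | forall i, (i < t)%N -> cylt i (n i) (f i) (B i) w] `&` cylt t n' f' B'.
  apply/seteqP; split => w /= h.
    split.
      move=> i it k hk; have := h i; rewrite mem_index_iota /n2 /f2 /B2.
      by rewrite (ltn_eqF it) /= (ltn_trans it) //; apply.
    move=> k hk; have := h t; rewrite mem_index_iota /n2 /f2 /B2 eqxx /= ltnSn.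
    by apply.
  move=> i; rewrite mem_index_iota /n2 /f2 /B2 /= ltnS; case: eqP => [->|ht] hi.
    by case: h => _; apply.
  by case: h => + _; apply; rewrite ltn_neqAle; apply/andP; split => //; apply/eqP.
rewrite E2 => ->.
rewrite (_ : (0%N :: iota 1 t) = index_iota 0 t.+1) // (_ : iota 0 (t - 0) = index_iota 0 t) //.
rewrite big_nat_recr //=; congr (_ * _).
  apply: eq_big_nat => i /andP [_ it].
  by rewrite /n2 /f2 /B2 (ltn_eqF it).
by rewrite /n2 /f2 /B2 eqxx.
Qed.

End Indep.

Section Indep2.
Variables (dd : nat) (d0 : measure_display) (Omega : measurableType d0)
  (R : realType) (P : probability Omega R)
  (A : nat -> Zd dd -> Zd dd -> Omega -> R).
Local Notation Z := (Zd dd).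
Hypothesis Ameas : forall t x y, measurable_fun setT (A t x y).
Hypothesis Hind : indep_family P (fun (t : nat) (p : Z * Z) => A t p.1 p.2).
Local Open Scope ereal_scope.

Lemma fin_P (X : set Omega) : measurable X -> P X = (fine (P X))%:E.
Proof.
move=> mX; rewrite fineK // ge0_fin_numE //.
by rewrite (le_lt_trans (probability_le1 P mX)) // ltey.
Qed.

Lemma sigma_indep t n' f' B' X : (forall k, measurable (B' k)) ->
  <<s Pi A t >> X ->
  P (X `&` cylt A t n' f' B') = P X * P (cylt A t n' f' B').
Proof.
move=> mB' hX.
set Zc := cylt A t n' f' B'.
have mZ : measurable Zc by apply: cylt_meas.
have r0 : (0 <= fine (P Zc))%R by apply: fine_ge0.
pose r := NngNum r0.
pose m1 := mrestr P mZ.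
pose m2 := mscale r P.
have HE : [set Y | Pi A t Y /\ Y `<=` setT] = Pi A t.
  by apply/seteqP; split => Y /=; [case|split].

have := @g_sigma_algebra_measure_unique_trace _ R Omega (Pi A t) setT measurableT.
rewrite HE => /(_ (@Pi_meas _ _ _ _ _ Ameas t) (@Pi_setI _ _ _ _ _ t) m1 m2).
have m1m2D : m1 setT = m2 setT.
  by rewrite /m1 /m2 /= /mrestr /mscale /= setTI probability_setT mule1 -fin_P.
move=> /(_ m1m2D).
have m1m2 : forall Y, Pi A t Y -> m1 Y = m2 Y.
  move=> Y hY; rewrite /m1 /m2 /= /mrestr /mscale /= -fin_P //.
  by rewrite (@Pi_indep _ _ _ _ _ _ Hind t Y n' f' B' hY mB') muleC.
move=> /(_ m1m2).
have m1oo : m1 setT < +oo.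
  by rewrite /m1 /= /mrestr setTI (le_lt_trans (probability_le1 P mZ)) // ltey.
move=> /(_ m1oo) h.
have := h (fun _ _ => @subsetT _ _) X hX.
by rewrite /m1 /m2 /= /mrestr /mscale /= -fin_P // muleC.
Qed.

End Indep2.

Local Open Scope classical_set_scope.
Local Open Scope ring_scope.

Section Meas.
Variables (dd rA : nat) (R : realType) (N0 : Zd dd -> R).
Local Notation Z := (Zd dd).
Variables (d' : measure_display) (T : measurableType d') (B : nat -> Z -> Z -> T -> R).

Lemma meas_M t : (forall s x y, (s < t)%N -> measurable_fun setT (B s x y)) ->
  forall y, measurable_fun setT (fun w => M rA N0 B t w y).
Proof.
elim: t => [|t IH] hB y /=; first exact: measurable_cst.
apply: measurable_sum => x; apply: measurable_realfun.measurable_funM.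
  by apply: IH => s x' y' st; apply: hB; apply: ltnW.
exact: hB.
Qed.

Lemma meas_map_eq (I : Type) (f : I -> T -> bool) (s : seq I) (l : seq bool) :
  (forall x, measurable_fun setT (f x)) ->
  measurable [set w | [seq f x w | x <- s] = l].
Proof.
move=> mf; elim: s l => [|x s IH] [|b l] /=.
- by rewrite (_ : [set w | _] = setT) //; apply/seteqP; split.
- by rewrite (_ : [set w | _] = set0) //; apply/seteqP; split.
- by rewrite (_ : [set w | _] = set0) //; apply/seteqP; split.
rewrite (_ : [set w | _] = (f x @^-1` [set b]) `&` [set w | [seq f x w | x <- s] = l]).
  apply: measurableI; last exact: IH.
  by rewrite -[X in measurable X]setTI; apply: mf.
apply/seteqP; split => w /=; first by case => -> ->.
by case => -> ->.
Qed.

End Meas.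

Local Open Scope classical_set_scope.
Local Open Scope ring_scope.

Lemma cyl_seq (T U : Type) (J : eqType) (X : J -> T -> U) (ps : seq J) d (B : set U) :
  [set w | forall k, (k < size ps)%N -> B (X (nth d ps k) w)] =
  [set w | forall p, p \in ps -> B (X p w)].
Proof.
apply/seteqP; split => w /= h.
  by move=> p /(nthP d) [k hk <-]; apply: h.
by move=> k hk; apply: h; apply: mem_nth.
Qed.

Section Main.
Variables (dd : nat) (d0 : measure_display) (Omega : measurableType d0)
  (R : realType) (P : probability Omega R)
  (A : nat -> Zd dd -> Zd dd -> Omega -> R) (rA : nat) (N0 : Zd dd -> R).
Local Notation Z := (Zd dd).
Hypothesis Ameas : forall t x y, measurable_fun setT (A t x y).
Hypothesis Hind : indep_family P (fun (t : nat) (p : Z * Z) => A t p.1 p.2).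
Hypothesis Hlaw : forall t, same_law P (fun p : Z * Z => A t p.1 p.2)
                        (fun p : Z * Z => A 0 p.1 p.2).
Hypothesis Hnn : {ae P, forall w, forall x y, (0 <= A 0%N x y w)%R}.
Hypothesis Hcol : indep_family P (fun (y : Z) (x : Z) => A 0 x y).
Hypothesis Hrange : forall x y : Z, (rA < l1 (x - y)%R)%N -> {ae P, forall w, A 0%N x y w = 0%R}.
Hypothesis Hshift : forall z : Z, same_law P (fun p : Z * Z => A 0 (p.1 + z) (p.2 + z))
                               (fun p : Z * Z => A 0 p.1 p.2).
Hypothesis N0ge0 : forall x, 0 <= N0 x.
Hypothesis N0fin : finite_set [set x | 0 < N0 x].

Lemma meas_pre t x y (B : set R) : measurable B -> measurable [set w | B (A t x y w)].
Proof. by move=> mB; rewrite -[X in measurable X]setTI; apply: Ameas. Qed.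

Lemma law_seq t (ps : seq (Z * Z)) (B : set R) : measurable B ->
  P [set w | forall p, p \in ps -> B (A t p.1 p.2 w)] =
  P [set w | forall p, p \in ps -> B (A 0 p.1 p.2 w)].
Proof.
move=> mB.
have := Hlaw t (size ps) (nth (0, 0) ps) (fun=> mB).
by rewrite (cyl_seq (fun p w => A t p.1 p.2 w)) (cyl_seq (fun p w => A 0 p.1 p.2 w)).
Qed.

Lemma law1 t x y (B : set R) : measurable B ->
  P [set w | B (A t x y w)] = P [set w | B (A 0 x y w)].
Proof.
move=> mB; have := law_seq t [:: (x, y)] mB.
have E s : [set w | forall p, p \in [:: (x, y)] -> B (A s p.1 p.2 w)] = [set w | B (A s x y w)].
  apply/seteqP; split => w /= hw; first by apply: (hw (x, y)); rewrite mem_seq1.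
  move: hw.
  by move=> h p; rewrite mem_seq1 => /eqP ->.
by rewrite !E.
Qed.

Local Open Scope ereal_scope.

Lemma ae_meas (E : set Omega) : measurable E -> {ae P, forall w, E w} -> P (~` E) = 0.
Proof. by move=> mE /negligibleP; apply; apply: measurableC. Qed.

Lemma meas_ae (E : set Omega) : measurable E -> P (~` E) = 0 -> {ae P, forall w, E w}.
Proof. by move=> mE h; apply/negligibleP => //; apply: measurableC. Qed.

Lemma ae_law t x y (B : set R) : measurable B -> {ae P, forall w, B (A 0 x y w)} ->
  {ae P, forall w, B (A t x y w)}.
Proof.
move=> mB h; apply: meas_ae; first exact: meas_pre.
rewrite probability_setC; last exact: meas_pre.
rewrite law1 // -probability_setC; last exact: meas_pre.
by apply: ae_meas => //; apply: meas_pre.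
Qed.

Lemma ae_count (U : countType) (Q : U -> Omega -> Prop) :
  (forall u, {ae P, forall w, Q u w}) -> {ae P, forall w, forall u, Q u w}.
Proof.
move=> h.
have := @ae_foralln _ _ _ P (fun n w => match (choice.unpickle n : option U) with Some u => Q u w | None => True end).
move=> /(_ _) H.
have : {ae P, forall w, forall n, match (choice.unpickle n : option U) with Some u => Q u w | None => True end}.
  apply: H => n; case: (choice.unpickle n : option U) => [u|]; first exact: h.
  exact: aeW.
apply: filterS => w hw u; have := hw (choice.pickle u); by rewrite choice.pickleK.
Qed.

Lemma ae_Gd : {ae P, forall w, Gd rA A w}.
Proof.
have h1 : forall t x y, {ae P, forall w, (0 <= A t x y w)%R}.
  move=> t x y.
  have H0 : {ae P, forall w, `[0%R, +oo[%classic (A 0 x y w)}.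
    by apply: filterS Hnn => w /(_ x y) /=; rewrite in_itv /= andbT.
  by apply: filterS (ae_law t (measurable_itv _) H0) => w /=; rewrite in_itv /= andbT.
have h2 : forall t x y, {ae P, forall w, (rA < l1 (x - y)%R)%N -> A t x y w = 0%R}.
  move=> t x y; have [hl|hl] := ltnP rA (l1 (x - y)%R).
    have H0 : {ae P, forall w, [set 0%R] (A 0 x y w)} by exact: (Hrange hl).
    have H1 := ae_law t (measurable_set1 (0%R : R)) H0.
    by apply: filterS H1 => w /= ->.
  by apply: aeW => w hw; exfalso; move: hw hl; lia.

have : {ae P, forall w, forall n : nat, forall p : Z * Z,
   (0 <= A n p.1 p.2 w)%R /\ ((rA < l1 (p.1 - p.2)%R)%N -> A n p.1 p.2 w = 0%R)}.
  apply: ae_count => n; apply: ae_count => p.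
  by apply: filterS2 (h1 n p.1 p.2) (h2 n p.1 p.2) => w.
apply: filterS => w h t x y; exact: (h t (x, y)).
Qed.


Local Open Scope ring_scope.
Definition pos t w : seq bool := [seq (0 < M rA N0 A t w x) | x <- F rA N0 t].
Definition Yset t (m : seq bool) : seq Z :=
  undup [seq x - v | x <- mask m (F rA N0 t), v <- cube dd rA].
Definition pairs (Y : seq Z) : seq (Z * Z) := [seq (y + v, y) | y <- Y, v <- cube dd rA].
Definition Zev t (Y : seq Z) : set Omega :=
  cylt A t (size (pairs Y)) (nth (0, 0) (pairs Y)) (fun=> [set 0]).
Definition Col0 : set Omega :=
  [set w | forall k, (k < size (cube dd rA))%N -> A 0 (nth 0 (cube dd rA) k) 0 w = 0].

Lemma Zev_eq t Y : Zev t Y = [set w | forall p, p \in pairs Y -> A t p.1 p.2 w = 0].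
Proof. by rewrite /Zev /cylt (cyl_seq (fun p w => A t p.1 p.2 w)). Qed.

Lemma Zev_meas t Y : measurable (Zev t Y).
Proof. by apply: cylt_meas => // k; exact: measurable_set1. Qed.

Lemma Col0_meas : measurable Col0.
Proof.
rewrite /Col0 (_ : [set w | _] = cylt A 0 (size (cube dd rA)) (fun k => (nth 0 (cube dd rA) k, 0)) (fun=> [set 0])) //.
by apply: cylt_meas => // k; exact: measurable_set1.
Qed.

Lemma P_Zev t Y : uniq Y -> P (Zev t Y) = (\prod_(y <- Y) P Col0)%E.
Proof.
move=> uY.
rewrite Zev_eq.
have -> := law_seq t (pairs Y) (measurable_set1 (0%R : R)).
have := Hcol uY (fun=> size (cube dd rA)) (fun y k => y + nth 0 (cube dd rA) k)
   (fun _ _ => measurable_set1 (0%R : R)).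
rewrite /= => E.
have -> : [set w | forall p, p \in pairs Y -> [set 0%R] (A 0 p.1 p.2 w)] =
   [set w | forall y, y \in Y -> forall k, (k < size (cube dd rA))%N ->
      [set 0%R] (A 0 (y + nth 0 (cube dd rA) k) y w)].
  apply/seteqP; split => w /= h.
    move=> y hy k hk; apply: (h (y + nth 0 (cube dd rA) k, y)).
    by apply/allpairsP; exists (y, nth 0 (cube dd rA) k); split => //; apply: mem_nth.
  move=> p /allpairsP [[y v] [/= hy hv ->]] /=.
  have [k hk <-] := nthP 0 hv; exact: h.
rewrite E; apply: eq_bigr => y _.
have := Hshift y (size (cube dd rA)) (fun k => (nth 0 (cube dd rA) k, 0)) (fun=> measurable_set1 (0%R : R)).
rewrite /Col0 /= => <-.
congr (P _); apply/seteqP; split => w /= h k hk; have := h k hk;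
  by rewrite ?add0r addrC.
Qed.


Local Open Scope ring_scope.

Lemma extinct_next t w : Gd rA A w -> Zev t (Yset t (pos t w)) w ->
  forall y, M rA N0 A t.+1 w y = 0.
Proof.
move=> G hZ y /=; apply: big1_seq => x /andP [_ hx].
have := M_ge0 N0ge0 t x G; rewrite le_eqVlt => /orP [/eqP <-|hp].
  by rewrite mul0r.
have [hl|hl] := ltnP rA (l1 (x - y)%R).
  by have [_ ->] := G t x y; rewrite ?mulr0.
rewrite Zev_eq in hZ; rewrite (hZ (x, y)) ?mulr0 //.
apply/allpairsP; exists (y, x - y) => /=; split.
- rewrite mem_undup; apply/allpairsP; exists (x, x - y) => /=; split.
  + by rewrite /pos -filter_mask mem_filter hp hx.
  + exact: cubeP.
  + by rewrite opprB addrC subrK.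
- exact: cubeP.
- by rewrite addrC subrK.
Qed.

Lemma dead_zero t w : Gd rA A w -> ~~ has id (pos t w) -> forall y, M rA N0 A t w y = 0.
Proof.
move=> G hd y; have [hy|hy] := boolP (y \in F rA N0 t); last exact: M_out.
apply/eqP; rewrite eq_le M_ge0 // andbT leNgt; apply/negP => hp.
move/hasPn: hd => /(_ (0 < M rA N0 A t w y)) H.
have : (0 < M rA N0 A t w y) \in pos t w by apply/mapP; exists y.
by move=> /H; rewrite /= hp.
Qed.

Lemma A_past s t x y : (s < t)%N ->
  measurable_fun setT (A s x y : g_sigma_algebraType (Pi A t) -> R).
Proof.
move=> st _ B mB; rewrite setTI; apply: sub_sigma_algebra.
exists (fun i => if i == s then 1 else 0)%N, (fun _ _ => (x, y)), (fun _ _ => B).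
split => //; apply/seteqP; split => w /=.
  move=> hB i it k; case: eqP => [e|] // _; subst i; exact: hB.
by move=> h; have := h s st 0%N; rewrite eqxx; apply.
Qed.

Lemma pos_past t (l : seq bool) : <<s Pi A t >> [set w | pos t w = l].
Proof.
have := @meas_map_eq _ (g_sigma_algebraType (Pi A t)) _ (fun x (w : g_sigma_algebraType (Pi A t)) => (0 < M rA N0 A t w x)) (F rA N0 t) l.
apply => x; apply: measurable_realfun.measurable_fun_ltr; first exact: measurable_cst.
apply: (@meas_M dd rA R N0 _ (g_sigma_algebraType (Pi A t)) A t) => s x' y' st.
exact: A_past.
Qed.

Lemma pos_meas t (l : seq bool) : measurable [set w | pos t w = l].
Proof.
apply: (@meas_map_eq _ Omega _ (fun x w => (0 < M rA N0 A t w x))) => x.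
apply: measurable_realfun.measurable_fun_ltr; first exact: measurable_cst.
exact: meas_M.
Qed.


Definition qr : R := fine (P Col0).
Lemma qr_ge0 : 0 <= qr. Proof. exact: fine_ge0. Qed.
Lemma qr_le1 : qr <= 1.
Proof.
have := probability_le1 P Col0_meas; rewrite (fin_P P Col0_meas) lee_fin //.
Qed.

Lemma prod_cst (c : R) (Y : seq Z) : (\prod_(y <- Y) c%:E)%E = (c ^+ size Y)%:E.
Proof.
elim: Y => [|y Y IH]; first by rewrite big_nil.
by rewrite big_cons IH /= exprS.
Qed.

Lemma P_Zev_ge t (m : seq bool) K : size m = size (F rA N0 t) -> (count id m <= K)%N ->
  ((qr ^+ (K * size (cube dd rA)))%:E <= P (Zev t (Yset t m)))%E.
Proof.
move=> hs hK; rewrite P_Zev ?undup_uniq // fin_P; last exact: Col0_meas.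
rewrite -/qr prod_cst lee_fin; apply: ler_wiXn2l; [exact: qr_ge0 | exact: qr_le1 |].
apply: leq_trans (size_undup _) _; rewrite size_allpairs size_mask //.
exact: leq_mul.
Qed.


Variable (N1 : set Omega).
Hypotheses (mN1 : measurable N1) (PN1 : P N1 = 0%E)
  (HN1 : ~` [set w | Gd rA A w] `<=` N1).

Lemma G1_Gd w : (~` N1) w -> Gd rA A w.
Proof. by move=> h; apply: contrapT => hG; apply: h; apply: HN1. Qed.

Lemma PG1 X : measurable X -> P (X `&` ~` N1) = P X.
Proof.
move=> mX; rewrite -setDE measureD //; last first.
  by rewrite (le_lt_trans (probability_le1 P mX)) // ltey.
by rewrite (@subset_measure0 _ _ _ P (X `&` N1) N1) ?sube0 //; exact: measurableI.
Qed.

Definition Ck K t := [set w | (0 < count id (pos t w) <= K)%N].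
Definition Hk K t := Ck K t `&` [set w | ~~ has id (pos t.+1 w)].
Definition Dm t (m : (size (F rA N0 t)).-tuple bool) := [set w | pos t w = m].
Arguments Dm t m : clear implicits.
Definition good K t := [set m : (size (F rA N0 t)).-tuple bool | (0 < count id m <= K)%N].
Arguments good K t : clear implicits.

Lemma Ck_big K t : Ck K t = \bigcup_(m in good K t) Dm t m.
Proof.
apply/seteqP; split => w /=.
  move=> h; have hs : size (pos t w) == size (F rA N0 t) by rewrite size_map.
  by exists (Tuple hs).
by move=> [m hm hw]; rewrite /Dm /= in hw; rewrite /Ck /= hw.
Qed.

Lemma triv_Dm t (D : set _) : trivIset D (Dm t).
Proof.
move=> m1 m2 _ _ [w [h1 h2]]; rewrite /Dm /= in h1 h2.
by apply: val_inj; rewrite /= -h1 -h2.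
Qed.

Lemma Dm_meas t m : measurable (Dm t m).
Proof. exact: pos_meas. Qed.

Lemma Ck_meas K t : measurable (Ck K t).
Proof.
rewrite Ck_big; apply: fin_bigcup_measurable; first exact: finite_finset.
by move=> m _; exact: Dm_meas.
Qed.

Lemma P_Ck K t : P (Ck K t) = (\sum_(m \in good K t) P (Dm t m))%E.
Proof.
rewrite Ck_big measure_fin_bigcup //; first exact: finite_finset.
- exact: triv_Dm.
- by move=> m _; exact: Dm_meas.
Qed.

Lemma Hk_meas K t : measurable (Hk K t).
Proof.
apply: measurableI; first exact: Ck_meas.
rewrite (_ : [set w | _] = \bigcup_(m in [set m : (size (F rA N0 t.+1)).-tuple bool | ~~ has id m]) Dm t.+1 m).
  apply: fin_bigcup_measurable; first exact: finite_finset.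
  by move=> m _; exact: Dm_meas.
apply/seteqP; split => w /=.
  move=> h; have hs : size (pos t.+1 w) == size (F rA N0 t.+1) by rewrite size_map.
  by exists (Tuple hs).
by move=> [m hm hw]; rewrite /Dm /= in hw; rewrite hw.
Qed.

Definition qK K := (qr ^+ (K * size (cube dd rA)))%:E.

Lemma Hk_low K t : (qK K * P (Ck K t) <= P (Hk K t `&` ~` N1))%E.
Proof.
rewrite P_Ck ge0_mule_fsumr //.
have mZ m : measurable (Dm t m `&` Zev t (Yset t m) `&` ~` N1).
  apply: measurableI; last exact: measurableC.
  apply: measurableI; [exact: Dm_meas | exact: Zev_meas].
apply: (@le_trans _ _ (\sum_(m \in good K t) P (Dm t m `&` Zev t (Yset t m) `&` ~` N1))%E).
  apply: lee_fsum; first exact: finite_finset.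
  move=> m hm; rewrite PG1; last by apply: measurableI; [exact: Dm_meas | exact: Zev_meas].
  rewrite /Zev (@sigma_indep dd d0 Omega R P A Ameas Hind t _ _ _ (Dm t m)) //; last first.
    exact: pos_past.
  rewrite -/(Zev t _) muleC; apply: lee_wpmul2l => //.
  apply: P_Zev_ge; first by rewrite size_tuple.
  by case/andP: hm.
have fin : finite_set (good K t) := finite_finset.
have tr : trivIset (good K t) (fun m => Dm t m `&` Zev t (Yset t m) `&` ~` N1).
  move=> m1 m2 _ _ [w [[[h1 _] _] [[h2 _] _]]].
  by apply: (@triv_Dm t setT m1 m2) => //; exists w.
rewrite -(measure_fin_bigcup P fin tr (fun m _ => mZ m)).
apply: le_measure.
- apply/mem_set; apply: fin_bigcup_measurable; first exact: finite_finset.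
  by move=> m _; exact: mZ.
- apply/mem_set; apply: measurableI; [exact: Hk_meas | exact: measurableC].
move=> w [m hm [[hD hZ] hN]]; split => //; split.
  by rewrite /Ck /= -/(pos t w); rewrite /Dm /= in hD; rewrite hD.
rewrite /Dm /= in hD; rewrite -hD in hZ.
have := extinct_next (G1_Gd hN) hZ => h0.
apply/hasPn => b /mapP [x _ ->]; by rewrite h0 ltxx.
Qed.


Hypothesis Hdelta : (0 < P [set w | forall x, A 0%N x 0%R w = 0%R])%E.

Lemma qr_gt0 : 0 < qr.
Proof.
have mB : measurable [set w | forall x, A 0%N x 0%R w = 0%R].
  rewrite (_ : [set w | _] = \bigcap_n (match (choice.unpickle n : option Z) with
      Some x => [set w | A 0 x 0 w = 0] | None => setT end)).
    apply: bigcapT_measurable => n; case: (choice.unpickle n) => [x|] //.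
    exact: (meas_pre _ _ _ (measurable_set1 (0%R : R))).
  apply/seteqP; split => w /=.
    by move=> h n _; case: (choice.unpickle n) => [x|] //; apply: h.
  by move=> h x; have := h (choice.pickle x) I; rewrite choice.pickleK.
have : (P [set w | forall x, A 0%N x 0%R w = 0%R] <= P Col0)%E.
  apply: le_measure; [exact/mem_set | exact/mem_set/Col0_meas |].
  by move=> w h k _; apply: h.
rewrite (fin_P P Col0_meas) -/qr => h.
by rewrite -lte_fin (lt_le_trans Hdelta h).
Qed.

Lemma count_dead j w : (forall y, M rA N0 A j w y = 0) -> count id (pos j w) = 0%N.
Proof. by move=> h; rewrite /pos; elim: (F rA N0 j) => //= x s ->; rewrite h ltxx. Qed.

Lemma Hk_triv K : trivIset setT (fun t => Hk K t `&` ~` N1).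
Proof.
have key i j w : (i < j)%N -> (Hk K i `&` ~` N1) w -> (Hk K j `&` ~` N1) w -> False.
  move=> ij [[_ hi] hN] [[hj _] _].
  have G := G1_Gd hN.
  have z := M_zero_le ij (dead_zero G hi).
  by move: hj; rewrite /Ck /= count_dead.
move=> i j _ _ [w [hi hj]]; case: (ltngtP i j) => // ij; exfalso.
- exact: (key i j w).
- exact: (key j i w).
Qed.

Lemma sum_Ck_fin K : (\sum_(0 <= t <oo) P (Ck K t) < +oo)%E.
Proof.
have h1 : (\sum_(0 <= t <oo) (qK K * P (Ck K t)) <= 1)%E.
  apply: (@le_trans _ _ (\sum_(0 <= t <oo) P (Hk K t `&` ~` N1))%E).
    apply: lee_nneseries => [t _ _|t _]; last exact: Hk_low.
    by apply: mule_ge0 => //; rewrite lee_fin; apply: exprn_ge0; exact: qr_ge0.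
  rewrite -(eq_eseriesl _ (P := fun i => i \in setT)); last by move=> i; rewrite in_setT.
  rewrite -measure_bigcup //; last exact: Hk_triv.
    apply: probability_le1; apply: bigcup_measurable => i _.
    apply: measurableI; [exact: Hk_meas | exact: measurableC].
  by move=> i _; apply: measurableI; [exact: Hk_meas | exact: measurableC].
rewrite /qK nneseriesZl // in h1.
have qp : (0 < qr ^+ (K * size (cube dd rA)))%R by apply: exprn_gt0; exact: qr_gt0.
move: h1; rewrite -lee_pdivlMl // => h1.
by rewrite (le_lt_trans h1) // mule1 ltey.
Qed.

Lemma limsup0 K : P (lim_sup_set (Ck K)) = 0%E.
Proof. apply: lim_sup_set_cvg0; [exact: Ck_meas | exact: sum_Ck_fin]. Qed.


Lemma counting_seq (s : seq Z) : uniq s -> counting [set` s] = ((size s)%:R)%:E :> \bar R.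
Proof.
move=> us; rewrite /counting asboolT; last exact: finite_seq.
have -> : fset_set [set` s] = [fset x in s]%fset.
  apply/fsetP => x; rewrite in_fset_set; last exact: finite_seq.
  rewrite mem_setE; apply/idP/imfsetP => [h|[y hy ->]] //; by exists x.
by rewrite card_fseq undup_id.
Qed.

Lemma count_occ t w : Gd rA A w ->
  counting (occupied N0 A t w) = ((count id (pos t w))%:R)%:E :> \bar R.
Proof.
move=> G.
have -> : occupied N0 A t w = [set` seq.filter (fun x => 0 < M rA N0 A t w x) (F rA N0 t)].
  rewrite /occupied (@Npop_M dd rA R N0 Omega A w t N0ge0 N0fin G); apply/seteqP; split => x /=.
    move=> hx; rewrite mem_filter hx /=; apply: contraT => hn.
    by move: hx; rewrite (M_out N0ge0 N0fin G hn) ltxx.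
  by rewrite mem_filter => /andP [].
by rewrite counting_seq ?filter_uniq ?uniq_F // size_filter /pos count_map.
Qed.

Lemma final_det w : Gd rA A w -> (forall K, ~ lim_sup_set (Ck K) w) ->
  ((fun t => @counting _ R (occupied N0 A t w)) @ \oo --> (0%R)%:E) \/
  ((fun t => @counting _ R (occupied N0 A t w)) @ \oo --> +oo%E).
Proof.
move=> G hK.
have ev K : exists n, forall j, (n <= j)%N -> ~ (0 < count id (pos j w) <= K)%N.
  apply: contrapT => hn; apply: (hK K) => n _.
  apply: contrapT => hj; apply: hn; exists n => j hnj hc; apply: hj.
  by exists j => //.
case: (pselect (exists t0, count id (pos t0 w) = 0%N)) => [[t0 h0]|hn].
  left; apply: cvg_near_cst; exists t0 => // j /= hj.
  rewrite count_occ // (count_dead (M_zero_le hj (dead_zero G _))) //.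
  by rewrite has_count h0.
right; apply/cvgeyPge => a.
have [n hn'] := ev (Num.trunc a).
exists n => // j /= hj; rewrite count_occ //.
have hc : (0 < count id (pos j w))%N.
  by rewrite lt0n; apply/eqP => h; apply: hn; exists j.
have hc2 : ((Num.trunc a).+1 <= count id (pos j w))%N.
  by apply: contrapT => h; apply: (hn' j hj); rewrite hc /=; lia.
rewrite lee_fin; apply: (le_trans (ltW (truncnS_gt a))).
by rewrite ler_nat.
Qed.

End Main.

End Helpers.
Import Helpers.
Unset Implicit Arguments. Set Strict Implicit. Set Printing Implicit Defensive.
Local Open Scope classical_set_scope.
Local Open Scope ring_scope.

Theorem lemma1p3 (dd : nat) (d0 : measure_display) (Omega : measurableType d0)
  (R : realType) (P : probability Omega R)
  (A : nat -> Zd dd -> Zd dd -> Omega -> R) (rA : nat) (N0 : Zd dd -> R) :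
  (0 < dd)%N ->
  (* each entry is a random variable *)
  (forall t x y, measurable_fun setT (A t x y)) ->
  (* (A_t)_t independent *)
  indep_family P (fun (t : nat) (p : Zd dd * Zd dd) => A t p.1 p.2) ->
  (* (A_t)_t identically distributed *)
  (forall t, same_law P (fun p : Zd dd * Zd dd => A t p.1 p.2)
                        (fun p : Zd dd * Zd dd => A 0 p.1 p.2)) ->
  (* (i) nonnegative entries *)
  {ae P, forall w, forall x y, (0 <= A 0%N x y w)%R} ->
  (* (ii) independent columns *)
  indep_family P (fun (y : Zd dd) (x : Zd dd) => A 0 x y) ->
  (* (iii) finite second moments *)
  (forall x y : Zd dd, ('E_P[fun w => (A 0%N x y w ^+ 2)%R] < +oo)%E) ->
  (* (iv) finite range *)
  (forall x y : Zd dd, (rA < l1 (x - y)%R)%N -> {ae P, forall w, A 0%N x y w = 0%R}) ->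
  (* (v) shift invariance in law *)
  (forall z : Zd dd, same_law P (fun p : Zd dd * Zd dd => A 0 (p.1 + z) (p.2 + z))
                               (fun p : Zd dd * Zd dd => A 0 p.1 p.2)) ->
  (* (vi) {x : sum_y a_{x+y} a_y <> 0} contains a linear basis of R^d *)
  (let a (y : Zd dd) : R := fine ('E_P[A 0%N 0%R y])%E in
   exists M : 'M[int]_dd,
     (forall i, \sum_(y \in [set: Zd dd]) a (row i M + y) * a y != 0) /\
     row_free (map_mx (fun z : int => z%:~R : R) M) /\
     row_full (map_mx (fun z : int => z%:~R : R) M)) ->
  (* initial configuration *)
  (forall x, 0 <= N0 x) ->
  finite_set [set x | 0 < N0 x] ->
  [set x | 0 < N0 x] !=set0 ->
  (* delta > 0 *)
  (0 < P [set w | forall x, A 0%N x 0%R w = 0%R])%E ->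
  {ae P, forall w,
     ((fun t => @counting _ R (occupied N0 A t w)) @ \oo --> (0%R)%:E) \/
     ((fun t => @counting _ R (occupied N0 A t w)) @ \oo --> +oo%E)}.
Proof.
move=> _ Ameas Hind Hlaw Hnn Hcol _ Hrange Hshift _ N0ge0 N0fin _ Hdelta.
have aeG := ae_Gd Ameas Hlaw Hnn Hrange.
have [N1 [mN1 PN1 HN1]] := aeG.
have L : forall K, P (lim_sup_set (Ck A rA N0 K)) = 0%E.
  move=> K; exact: (limsup0 Ameas Hind Hlaw Hcol Hshift N0ge0 N0fin mN1 PN1 HN1 Hdelta K).
have aeL : {ae P, forall w, forall K, ~ lim_sup_set (Ck A rA N0 K) w}.
  apply: ae_foralln => K.
  exists (lim_sup_set (Ck A rA N0 K)); split => //.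
    rewrite /lim_sup_set; apply: bigcap_measurableType => n _.
    apply: bigcup_measurable => j _; exact: Ck_meas.
  - exact: L.
  by move=> w /= /contrapT.
apply: filterS2 aeG aeL => w G hK.
exact: (final_det N0ge0 N0fin Hdelta G hK).
Qed.
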